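(* Let $V\in\mathbb{R}^{k\times n}$ with columns $v_1,\ldots,v_n$ satisfy $\mathrm{rank}(V)<k$. Let $P=\mathrm{diag}(P_1,\ldots,P_n)\in\mathbb{R}^{nk\times nk}$ be block diagonal with $P_i=I_k-v_iv_i^T$. Then for any $A,B\in\mathbb{R}^{n\times n}$, every (possibly complex) eigenvalue of $AB$ is also an eigenvalue of $J=(A\otimes I_k)\,P\,(B\otimes I_k)$.
   Context: $\otimes$ is the Kronecker product; $I_k$ is the $k\times k$ identity. *)

(* Defs.v *)
From HB Require Import structures.
From mathcomp Require Import all_boot all_order all_algebra.
From mathcomp Require Import complex mxtens.
Set Implicit Arguments. Unset Strict Implicit. Unset Printing Implicit Defensive.
Import Order.TTheory GRing.Theory Num.Theory.
Local Open Scope ring_scope.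

(* Kronecker product: [A *t B] from real_closed/mxtens, row index (i,a) ~ i*k+a. *)

(* Block diagonal P = diag(P_1,...,P_n) with P_i = I_k - v_i v_i^T,
   where v_i = col i V; written as sum_i E_ii (x) P_i (same index ordering
   as the Kronecker products A (x) I_k). *)
Definition blockP (R : pzRingType) (k n : nat) (V : 'M[R]_(k, n)) : 'M[R]_(n * k) :=
  \sum_(i < n) (delta_mx i i *t (1%:M - col i V *m (col i V)^T)).

Definition Jmx (R : pzRingType) (k n : nat) (V : 'M[R]_(k, n)) (A B : 'M[R]_n)
  : 'M[R]_(n * k) :=
  (A *t (1%:M : 'M[R]_k)) *m blockP V *m (B *t (1%:M : 'M[R]_k)).

Definition cmx (R : rcfType) (m p : nat) (M : 'M[R]_(m, p)) : 'M[complex R]_(m, p) :=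
  map_mx (fun x : R => Complex x 0) M.

(* Main.v *)
Require Import Defs.
From HB Require Import structures.
From mathcomp Require Import all_boot all_order all_algebra.
From mathcomp Require Import complex mxtens.
Import Order.TTheory GRing.Theory Num.Theory.
Local Open Scope ring_scope.

Lemma tens_suml (F : comPzRingType) (I : Type) (r : seq I) (P : pred I) m n p q
  (G : I -> 'M[F]_(m, n)) (w : 'M[F]_(p, q)) :
  (\sum_(i <- r | P i) G i) *t w = \sum_(i <- r | P i) (G i *t w).
Proof.
apply/matrixP => a b; rewrite !mxE summxE mulr_suml summxE.
by apply: eq_bigr => i _; rewrite !mxE.
Qed.

Lemma key (F : fieldType) k n (V : 'M[F]_(k, n)) (A B : 'M[F]_n)
  (w : 'rV[F]_k) (u : 'rV[F]_n) lam :
  w *m V = 0 -> u *m (A *m B) = lam *: u ->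
  ((u *t w) *m Jmx V A B = lam *: (u *t w)).
Proof.
move=> hw hu.
have hP : forall X : 'rV[F]_n, (X *t w) *m blockP V = X *t w.
  move=> X; rewrite /blockP mulmx_sumr.
  under eq_bigr => i _ do rewrite tensmx_mul.
  have hwi : forall i, w *m (1%:M - col i V *m (col i V)^T) = w.
    move=> i; rewrite mulmxBr mulmx1 mulmxA colE mulmxA hw !mul0mx subr0 //.
  under eq_bigr => i _ do rewrite hwi.
  by rewrite -tens_suml -mulmx_sumr -mx1_sum_delta mulmx1.
rewrite /Jmx !mulmxA. rewrite tensmx_mul mulmx1 hP tensmx_mul mulmx1 -mulmxA hu.
by apply/matrixP => a b; rewrite !mxE mulrA.
Qed.

Lemma tens_neq0 (F : fieldType) n k (u : 'rV[F]_n) (w : 'rV[F]_k) :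
  u != 0 -> w != 0 -> u *t w != 0.
Proof.
move=> /matrix0Pn [i [j uj]] /matrix0Pn [i' [a wa]].
apply/matrix0Pn; exists (mxtens_index (i, i')), (mxtens_index (j, a)).
by rewrite tensmxE mulf_neq0.
Qed.

Lemma cmxJ (R : rcfType) (k n : nat) (V : 'M[R]_(k, n)) (A B : 'M[R]_n) :
  cmx (Jmx V A B) = Jmx (cmx V) (cmx A) (cmx B).
Proof.
rewrite /cmx /Jmx /blockP.
change (fun x : R => Complex x 0) with (real_complex R).
rewrite !map_mxM !map_mxT map_mx1 map_mx_sum; congr (_ *m _ *m _).
apply: eq_bigr => i _; rewrite map_mxT map_delta_mx map_mxB map_mx1 map_mxM.
by rewrite -map_trmx map_col.
Qed.

Lemma cmxM (R : rcfType) m p q (X : 'M[R]_(m, p)) (Y : 'M[R]_(p, q)) :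
  cmx (X *m Y) = cmx X *m cmx Y.
Proof.
rewrite /cmx; change (fun x : R => Complex x 0) with (real_complex R).
by rewrite map_mxM.
Qed.

Theorem lemma8 (R : rcfType) (k n : nat) (V : 'M[R]_(k, n))
  (hV : (\rank V < k)%N) (A B : 'M[R]_n) (lambda : complex R) :
  eigenvalue (cmx (A *m B)) lambda ->
  eigenvalue (cmx (Jmx V A B)) lambda.
Proof.
move=> /eigenvalueP [u hu u0].
have : kermx V != 0.
  by rewrite -mxrank_eq0 mxrank_ker subn_eq0 -ltnNge.
move=> /rowV0Pn [w /sub_kermxP hw w0].
apply/eigenvalueP; exists (u *t cmx w); last first.
  apply: tens_neq0 => //; apply: contra w0 => /eqP h.
  by apply/eqP/matrixP => a b; move/matrixP: h => /(_ a b); rewrite !mxE => -[].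
rewrite cmxJ; apply: key => //.
  by rewrite -cmxM hw; apply/matrixP => a b; rewrite !mxE.
by rewrite -cmxM.
Qed.
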